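(* Let $\mathcal{X}$ be a Banach space with an unconditional basis $\mathcal{E}=\{e_n\}_{n\ge1}$, ordered by $\mathcal{E}$, and let $T$ be an injective lattice homomorphism on $\mathcal{X}$ with dense range. Then $T$ is a weighted permutation operator: there exist a permutation $\xi:\mathbb{N}\to\mathbb{N}$ and positive numbers $\{w_n\}_{n\ge1}$ with $Te_n=w_ne_{\xi(n)}$ for all $n$.
   Context: For $x=\sum_n x_ne_n\in\mathcal{X}$, $x\ge 0$ means all coordinates $x_n$ are real and $\ge0$. On vectors with real coordinates the lattice operations are coordinatewise: $x\vee y=\sum_n\max(x_n,y_n)e_n$, $x\wedge y=\sum_n\min(x_n,y_n)e_n$. An operator $T$ is positive if $Tx\ge0$ whenever $x\ge0$. A bounded linear operator $T$ is a lattice homomorphism if $T(x\vee y)=Tx\vee Ty$ for all $x,y$ (with real coordinates). *)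

(* Defs.v *)
From HB Require Import structures.
From mathcomp Require Import all_boot all_order all_algebra.
From mathcomp Require Import complex.
From mathcomp Require Import all_classical all_reals all_analysis.
Set Implicit Arguments. Unset Strict Implicit. Unset Printing Implicit Defensive.
Import Order.TTheory GRing.Theory Num.Theory.
Import numFieldNormedType.Exports.
Local Open Scope ring_scope.
Local Open Scope classical_set_scope.

Section Defs.
Variables (K : numFieldType) (X : normedModType K).

Definition has_expansion (e : nat -> X) (x : X) (a : nat -> K) : Prop :=
  (fun N : nat => \sum_(n < N) a n *: e n) @ \oo --> x.

Definition unconditional_basis (e : nat -> X) : Prop :=
  forall x : X,
    (exists! a : nat -> K, has_expansion e x a) /\
    (forall a, has_expansion e x a ->
       forall s : nat -> nat, bijective s -> has_expansion (e \o s) x (a \o s)).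

Definition real_coords (e : nat -> X) (x : X) : Prop :=
  forall a, has_expansion e x a -> forall n, a n \is Num.real.

Definition is_join (e : nat -> X) (x y z : X) : Prop :=
  real_coords e x /\ real_coords e y /\
  forall a b c, has_expansion e x a -> has_expansion e y b -> has_expansion e z c ->
    forall n, c n = Num.max (a n) (b n).

Definition lattice_hom (e : nat -> X) (T : X -> X) : Prop :=
  forall x y z, real_coords e x -> real_coords e y -> is_join e x y z ->
    is_join e (T x) (T y) (T z).
End Defs.

(* Main.v *)
Require Import Defs.
From HB Require Import structures.
From mathcomp Require Import all_boot all_order all_algebra.
From mathcomp Require Import complex.
From mathcomp Require Import all_classical all_reals all_analysis.
From mathcomp Require Import lra ring.
Import Order.TTheory GRing.Theory Num.Theory.
Import numFieldNormedType.Exports.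
Local Open Scope ring_scope.
Local Open Scope classical_set_scope.
Local Open Scope complex_scope.
Local Open Scope ring_scope.

Section P0.
Context {R : realType} {X : completeNormedModType R[i]}.
Definition nn (x : X) : R := complex.Re `|x|.
Lemma nnE x : `|x| = (nn x)%:C.
Proof. by rewrite /nn RRe_real // ger0_real. Qed.
Lemma nn_ge0 x : 0 <= nn x.
Proof. by rewrite -ler0c -nnE. Qed.
Lemma nnD x y : nn (x + y) <= nn x + nn y.
Proof. by rewrite -lecR rmorphD /= -!nnE ler_normD. Qed.
Lemma nnN x : nn (- x) = nn x.
Proof. by rewrite /nn normrN. Qed.
Lemma nnB x y : nn (x - y) = nn (y - x).
Proof. by rewrite /nn distrC. Qed.
Lemma nn0 : nn 0 = 0.
Proof. by rewrite /nn normr0. Qed.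
Lemma nn_eq0 x : (nn x == 0) = (x == 0).
Proof. by rewrite -[x == 0]normr_eq0 nnE -(inj_eq (@complexI R)). Qed.
Definition nc (c : R[i]) : R := complex.Re `|c|.
Lemma ncE c : `|c| = (nc c)%:C.
Proof. by rewrite /nc RRe_real // ger0_real. Qed.
Lemma nc_ge0 c : 0 <= nc c.
Proof. rewrite -ler0c -ncE; exact: normr_ge0. Qed.
Lemma nnZ c x : nn (c *: x) = nc c * nn x.
Proof. by apply: (@complexI R); rewrite rmorphM /= -!nnE -ncE normrZ. Qed.
Lemma ncR (a : R) : nc a%:C = `|a|.
Proof. by rewrite /nc normc_def /= expr0n /= addr0 sqrtr_sqr. Qed.
Lemma nnZr (a : R) x : nn (a%:C *: x) = `|a| * nn x.
Proof. by rewrite nnZ ncR. Qed.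
Lemma ncM a b : nc (a * b) = nc a * nc b.
Proof. by apply: (@complexI R); rewrite rmorphM /= -!ncE normrM. Qed.
Lemma nc_eq0 c : (nc c == 0) = (c == 0).
Proof. by rewrite -[c == 0]normr_eq0 ncE -(inj_eq (@complexI R)). Qed.
Lemma ncD a b : nc (a + b) <= nc a + nc b.
Proof. by rewrite -lecR rmorphD /= -!ncE ler_normD. Qed.
Lemma ncN a : nc (- a) = nc a.
Proof. by rewrite /nc normrN. Qed.
Lemma nc1 : nc 1 = 1.
Proof. by rewrite /nc normr1. Qed.

Lemma cvgnnP (f : nat -> X) y : f @ \oo --> y <->
  forall eps : R, 0 < eps -> exists N, forall n, (N <= n)%N -> nn (y - f n) < eps.
Proof.
rewrite cvgrPdist_lt; split => H eps eps0.
- have := H eps%:C; rewrite ltcR => /(_ eps0) [N _ HN].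
  by exists N => n /HN /=; rewrite nnE ltcR.
- have epsR : eps \is Num.real by rewrite gtr0_real.
  move: eps0; rewrite -(RRe_real epsR) ltcR => eps0.
  have [N HN] := H _ eps0; exists N => // n /= /HN.
  by rewrite nnE ltcR.
Qed.
End P0.

Section P2.
Context {R : realType} {X : completeNormedModType R[i]}.

Lemma nn_tri (x y z : X) : nn (x - z) <= nn (x - y) + nn (y - z).
Proof. by rewrite -[x - z](subrKA y) nnD. Qed.

Lemma cauchy_nn (u : nat -> X) :
  (forall eps, 0 < eps -> exists N, forall m n, (N <= m)%N -> (N <= n)%N -> nn (u m - u n) < eps) ->
  exists l : X, u @ \oo --> l.
Proof.
move=> H.
have : cvg (u @ \oo).
  apply/cauchy_cvgP; apply: cauchy_exP => eps eps0.
  have epsR : eps \is Num.real by rewrite gtr0_real.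
  move: eps0; rewrite -(RRe_real epsR) ltcR => eps0.
  have [N HN] := H _ eps0.
  exists (u N); exists N => // n /= hn.
  by rewrite -ball_normE /ball_ /= nnE ltcR HN.
by move=> hc; exists (lim (u @ \oo)).
Qed.

Lemma le_lim (u : nat -> X) l a r N0 : u @ \oo --> l ->
  (forall n, (N0 <= n)%N -> nn (a - u n) <= r) -> nn (a - l) <= r.
Proof.
move=> /cvgnnP hl hu; apply/ler_addgt0Pr => eps eps0.
have [N1 HN1] := hl _ eps0.
have h1 := hu (maxn N0 N1) (leq_maxl _ _).
have h2 := HN1 (maxn N0 N1) (leq_maxr _ _).
apply: (le_trans (nn_tri a (u (maxn N0 N1)) l)).
by rewrite nnB in h2; apply: lerD => //; apply: ltW.
Qed.

Lemma small_inv (eps : R) : 0 < eps -> exists n : nat, n.+1%:R^-1 < eps.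
Proof.
move=> eps0; exists (Num.truncn eps^-1).
by rewrite -ltf_pV2 ?(posrE,divr_gt0)// ?invrK ?truncnS_gt // posrE invr_gt0.
Qed.

Lemma baire (C : nat -> set X) : (forall k, closed (C k)) -> (forall x, exists k, C k x) ->
  exists k x0 r, 0 < r /\ forall y, nn (x0 - y) < r -> C k y.
Proof.
move=> Ccl Ccov; apply: contrapT => H.
have HN : forall k x0 r, 0 < r -> exists y, nn (x0 - y) < r /\ ~ C k y.
  move=> k x0 r r0; apply: contrapT => H2; apply: H; exists k, x0, r; split=> // y hy.
  by apply: contrapT => Cy; apply: H2; exists y.
have step : forall p : nat * (X * R), exists q : X * R, 0 < p.2.2 ->
   0 < q.2 /\ q.2 <= (p.1.+1%:R)^-1 /\
   forall y, nn (q.1 - y) <= q.2 -> nn (p.2.1 - y) < p.2.2 /\ ~ C p.1 y.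
  move=> [k [x r]] /=; case: (boolP (0 < r)) => r0; last by exists (x, r).
  have r20 : 0 < r / 2 by rewrite divr_gt0.
  have [y0 [hy0 ny0]] := HN k x (r / 2) r20.
  have : nbhs y0 (~` C k) by apply: open_nbhs_nbhs; split; [apply: closed_openC; exact: Ccl|exact: ny0].
  move=> /nbhs_normP [d d0 hd].
  have dR : d \is Num.real by rewrite gtr0_real.
  have d0' : 0 < d := d0.
  have d0r : 0 < complex.Re d by move: d0'; rewrite ltcE /= => /andP[_].
  set dr := complex.Re d in d0r.
  pose r' := Num.min (dr / 2) (Num.min (r / 4) (k.+1%:R^-1)).
  exists (y0, r') => _ /=.
  have r'1 : r' <= dr / 2 by rewrite /r' ge_min lexx.
  have r'2 : r' <= r / 4 by rewrite /r' !ge_min lexx !orbT.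
  have r'3 : r' <= k.+1%:R^-1 by rewrite /r' !ge_min lexx !orbT.
  split; first by rewrite /r' !lt_min divr_gt0 //= divr_gt0 //= invr_gt0.
  split => // y hy; split.
    apply: (le_lt_trans (nn_tri x y0 y)).
    have : nn (y0 - y) <= r / 4 by apply: (le_trans hy).
    by move: hy0; lra.
  apply: (hd y) => /=.
  rewrite -(RRe_real dR) nnE ltcR; apply: (le_lt_trans hy); apply: (le_lt_trans r'1).
  by lra.
have [g Hg] := choice step.
pose fix a n := if n is k.+1 then g (k, a k) else ((0 : X), (1 : R)).
have pos : forall k, 0 < (a k).2.
  by elim => [|k IH] //=; have [] := Hg (k, a k) IH.
have rad : forall k, (a k.+1).2 <= (k.+1%:R)^-1.
  by move=> k /=; have [_ []] := Hg (k, a k) (pos k).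
have incl : forall k y, nn ((a k.+1).1 - y) <= (a k.+1).2 ->
    nn ((a k).1 - y) < (a k).2 /\ ~ C k y.
  by move=> k y /=; have [_ [_]] := Hg (k, a k) (pos k); apply.
have nested : forall k m, (k <= m)%N -> forall y,
    nn ((a m).1 - y) <= (a m).2 -> nn ((a k).1 - y) <= (a k).2.
  move=> k; elim => [|m IH].
    by rewrite leqn0 => /eqP -> .
  rewrite leq_eqVlt => /orP [/eqP -> //|]; rewrite ltnS => km y hy.
  by apply: IH => //; have [/ltW] := incl m y hy.
have cent : forall k m, (k <= m)%N -> nn ((a k).1 - (a m).1) <= (a k).2.
  move=> k m km; apply: (nested k m km).
  by rewrite subrr nn0 ltW.
have [L HL] : exists L : X, (fun n => (a n).1) @ \oo --> L.
  apply: cauchy_nn => eps eps0.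
  have [K HK] := small_inv (eps / 2) (divr_gt0 eps0 (ltr0Sn R 1)).
  exists K.+1 => m n hm hn.
  apply: (le_lt_trans (nn_tri _ (a K.+1).1 _)).
  have h1 := cent _ _ hm; have h2 := cent _ _ hn; rewrite nnB in h1.
  have h3 := rad K.
  set q := K.+1%:R^-1 in HK h3.
  by lra.
have [k Ck] := Ccov L.
have hL : nn ((a k.+1).1 - L) <= (a k.+1).2.
  by apply: (le_lim _ _ _ _ k.+1 HL) => n hn; apply: cent.
by have [_] := incl k L hL.
Qed.
End P2.

Section P2b.
Context {R : realType} {X : completeNormedModType R[i]}.

Lemma closure_nn (A : set X) x : closure A x ->
  forall eps, 0 < eps -> exists y, A y /\ nn (x - y) < eps.
Proof.
move=> cA eps eps0.
have : nbhs x [set y | nn (x - y) < eps].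
  apply/nbhs_normP; exists eps%:C; first by rewrite /= ltcR.
  by move=> y /=; rewrite nnE ltcR.
by move=> /cA [y [Ay hy]]; exists y.
Qed.

Lemma lim_uniq (f : nat -> X) (a b : X) : f @ \oo --> a -> f @ \oo --> b -> a = b.
Proof.
move=> ha hb; apply/eqP; rewrite -subr_eq0 -nn_eq0 eq_le nn_ge0 andbT.
apply/ler_addgt0Pr => eps eps0; rewrite add0r.
have [N HN] := (cvgnnP _ _).1 ha eps eps0.
apply: (le_lim _ _ _ _ N hb) => n hn; exact: ltW (HN n hn).
Qed.

Lemma cvgRP (u : nat -> R) (l : R) : u @ \oo --> l <->
  forall eps : R, 0 < eps -> exists N, forall n, (N <= n)%N -> `|l - u n| < eps.
Proof.
rewrite cvgrPdist_lt; split => H eps eps0.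
- by have [N _ HN] := H eps eps0; exists N => n /HN.
- by have [N HN] := H eps eps0; exists N.
Qed.

Lemma cauchy_R (u : nat -> R) :
  (forall eps, 0 < eps -> exists N, forall m n, (N <= m)%N -> (N <= n)%N -> `|u m - u n| < eps) ->
  exists l : R, u @ \oo --> l.
Proof.
move=> H.
have : cvg (u @ \oo).
  apply/cauchy_cvgP; apply: cauchy_exP => eps eps0.
  have [N HN] := H _ eps0.
  exists (u N); exists N => // n /= hn.
  by rewrite -ball_normE /ball_ /= HN.
by move=> hc; exists (lim (u @ \oo)).
Qed.

Lemma hsmall (D : R) : 0 <= D -> forall eps, 0 < eps ->
  exists J0, forall J, (J0 <= J)%N -> D / 2 ^+ J < eps.
Proof.
move=> D0 eps eps0.
have [K HK] := small_inv ((eps / (D + 1))) (divr_gt0 eps0 (ltr_wpDl D0 ltr01)).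
exists K => J hJ.
have h2 : (J.+1%:R : R) <= 2 ^+ J.
  by rewrite -natrX ler_nat ltn_expl.
have hJ1 : (K.+1%:R : R) <= J.+1%:R by rewrite ler_nat ltnS.
have pJ : 0 < (J.+1%:R : R) by [].
have pK : 0 < (K.+1%:R : R) by [].
have p2 : 0 < (2 : R) ^+ J by rewrite exprn_gt0.
have : D / 2 ^+ J <= D / K.+1%:R.
  apply: ler_wpM2l => //; rewrite lef_pV2 ?posrE //; exact: le_trans hJ1 h2.
move=> h; apply: (le_lt_trans h).
have D1 : 0 < D + 1 by rewrite ltr_wpDl.
have h1 : D * K.+1%:R^-1 <= (D + 1) * K.+1%:R^-1.
  by rewrite ler_wpM2r ?invr_ge0 ?ler0n // lerDl ler01.
have h3 : (D + 1) * (eps / (D + 1)) = eps.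
  by rewrite mulrCA mulfV ?mulr1 // gt_eqF.
apply: (le_lt_trans h1); rewrite -[X in _ < X]h3 ltr_pM2l //.
Qed.

Lemma ncE2 (a : R[i]) : nc a = Num.sqrt (complex.Re a ^+ 2 + complex.Im a ^+ 2).
Proof. by rewrite /nc normc_def. Qed.

Lemma Re_le (a : R[i]) : `|complex.Re a| <= nc a.
Proof.
rewrite ncE2 -sqrtr_sqr ler_sqrt ?addr_ge0 ?sqr_ge0 //.
by rewrite lerDl sqr_ge0.
Qed.

Lemma Im_le (a : R[i]) : `|complex.Im a| <= nc a.
Proof.
rewrite ncE2 -sqrtr_sqr ler_sqrt ?addr_ge0 ?sqr_ge0 //.
by rewrite lerDr sqr_ge0.
Qed.

Lemma nc_le (a : R[i]) : nc a <= `|complex.Re a| + `|complex.Im a|.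
Proof.
rewrite ncE2.
have hx := real_normK (num_real (complex.Re a)).
have hy := real_normK (num_real (complex.Im a)).
set x := complex.Re a in hx *; set y := complex.Im a in hy *.
rewrite -(ger0_norm (addr_ge0 (normr_ge0 x) (normr_ge0 y))) -sqrtr_sqr.
rewrite ler_sqrt ?sqr_ge0 //.
have := mulr_ge0 (normr_ge0 x) (normr_ge0 y).
by nra.
Qed.

Lemma ReB (a b : R[i]) : complex.Re (a - b) = complex.Re a - complex.Re b.
Proof. by case: a => ? ?; case: b => ? ?. Qed.
Lemma ImB (a b : R[i]) : complex.Im (a - b) = complex.Im a - complex.Im b.
Proof. by case: a => ? ?; case: b => ? ?. Qed.

Lemma line (v w : X) (s : nat -> R[i]) : v != 0 ->
  (fun J => s J *: v) @ \oo --> w -> exists c, w = c *: v.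
Proof.
move=> v0 hw.
have nv0 : 0 < nn v by rewrite lt_def nn_eq0 v0 nn_ge0.
have cau : forall eps, 0 < eps -> exists N, forall m n, (N <= m)%N -> (N <= n)%N ->
    nc (s m - s n) < eps.
  move=> eps eps0.
  have /cvgnnP := hw => /(_ (eps * nn v / 2)) [].
    by rewrite divr_gt0 // mulr_gt0.
  move=> N HN; exists N => m n hm hn.
  have h1 := HN _ hm; have h2 := HN _ hn.
  rewrite nnB in h1.
  have := nn_tri (s m *: v) w (s n *: v).
  rewrite -scalerBl nnZ => h3.
  rewrite -(ltr_pM2r nv0).
  by lra.
have [a Ha] : exists a : R, (fun J => complex.Re (s J)) @ \oo --> a.
  apply: cauchy_R => eps eps0; have [N HN] := cau _ eps0.
  exists N => m n hm hn; rewrite -ReB.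
  exact: le_lt_trans (Re_le _) (HN _ _ hm hn).
have [b Hb] : exists b : R, (fun J => complex.Im (s J)) @ \oo --> b.
  apply: cauchy_R => eps eps0; have [N HN] := cau _ eps0.
  exists N => m n hm hn; rewrite -ImB.
  exact: le_lt_trans (Im_le _) (HN _ _ hm hn).
exists (a +i* b)%C; apply: (lim_uniq _ _ _ hw).
apply/cvgnnP => eps eps0.
have e2 : 0 < eps / nn v / 2 by rewrite !divr_gt0.
have [Na HNa] := (cvgRP _ _).1 Ha _ e2.
have [Nb HNb] := (cvgRP _ _).1 Hb _ e2.
exists (maxn Na Nb) => n hn.
have ha := HNa n (leq_trans (leq_maxl _ _) hn).
have hb := HNb n (leq_trans (leq_maxr _ _) hn).
rewrite -scalerBl nnZ.
have hc := nc_le ((a +i* b)%C - s n).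
rewrite ReB ImB /= in hc.
rewrite -ltr_pdivlMr //.
set q := eps / nn v in ha hb *.
by lra.
Qed.

End P2b.

Section P1.
Context {R : realType} {X : completeNormedModType R[i]}.
Variable (e : nat -> X).
Hypothesis ub : forall x, exists! a : nat -> R[i], has_expansion e x a.

Lemma ex_exp x : exists a, has_expansion e x a.
Proof. by case: (ub x) => a [h _]; exists a. Qed.
Definition cf x : nat -> R[i] := projT1 (cid (ex_exp x)).
Lemma cfP x : has_expansion e x (cf x).
Proof. exact: (projT2 (cid (ex_exp x))). Qed.
Lemma cf_uniq x a : has_expansion e x a -> cf x = a.
Proof.
move=> ha; case: (ub x) => a0 [h0 u].
by rewrite -(u _ ha) (u _ (cfP x)).
Qed.
Definition S N x := \sum_(n < N) cf x n *: e n.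

Lemma cvg_eqP (f : nat -> X) l N0 : (forall n, (N0 <= n)%N -> f n = l) -> f @ \oo --> l.
Proof.
move=> h; apply/cvgnnP => eps eps0; exists N0 => n /h ->.
by rewrite subrr nn0.
Qed.

Lemma cfD x y : cf (x + y) = fun n => cf x n + cf y n.
Proof.
apply: cf_uniq; rewrite /has_expansion.
have -> : (fun N => \sum_(n < N) (cf x n + cf y n) *: e n) =
   (fun N => \sum_(n < N) cf x n *: e n + \sum_(n < N) cf y n *: e n).
  by apply: funext => N /=; rewrite -big_split; apply: eq_bigr => i _; rewrite scalerDl.
exact: cvgD (cfP x) (cfP y).
Qed.

Lemma cfZ c x : cf (c *: x) = fun n => c * cf x n.
Proof.
apply: cf_uniq; rewrite /has_expansion.
have -> : (fun N => \sum_(n < N) (c * cf x n) *: e n) =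
   (fun N => c *: \sum_(n < N) cf x n *: e n).
  by apply: funext => N /=; rewrite scaler_sumr; apply: eq_bigr => i _; rewrite scalerA.
exact: cvgZl_tmp (cfP x).
Qed.

Lemma cf0 : cf 0 = fun _ => 0.
Proof.
apply: cf_uniq; apply: (@cvg_eqP _ _ 0%N) => n _.
by rewrite big1 // => i _; rewrite scale0r.
Qed.

Lemma sum_delta m N : (m < N)%N ->
  \sum_(n < N) ((n : nat) == m)%:R *: e n = e m.
Proof.
elim: N => [//|N IH]; rewrite ltnS leq_eqVlt => /orP[/eqP->|hm].
  rewrite big_ord_recr /= eqxx scale1r big1 ?add0r // => i _.
  by rewrite (ltn_eqF (ltn_ord i)) scale0r.
rewrite big_ord_recr /= IH // (gtn_eqF hm) scale0r addr0 //.
Qed.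

Lemma cfe m : cf (e m) = fun n => (n == m)%:R.
Proof.
apply: cf_uniq; apply: (@cvg_eqP _ _ m.+1) => n hn.
exact: sum_delta.
Qed.

Lemma e_neq0 m : e m != 0.
Proof.
apply/negP => /eqP em0.
have h1 := cfe m.
have : cf (e m) = fun _ => 0 by rewrite em0 cf0.
rewrite h1 => /(congr1 (fun f => f m)); rewrite eqxx => /eqP.
by rewrite oner_eq0.
Qed.

Lemma S_cvg x : (fun N => S N x) @ \oo --> x.
Proof. exact: cfP. Qed.

Lemma SD N x y : S N (x + y) = S N x + S N y.
Proof. by rewrite /S cfD -big_split; apply: eq_bigr => i _; rewrite scalerDl. Qed.

Lemma SZ N c x : S N (c *: x) = c *: S N x.
Proof. by rewrite /S cfZ scaler_sumr; apply: eq_bigr => i _; rewrite scalerA. Qed.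

Lemma S0 N : S N 0 = 0.
Proof. by rewrite /S cf0 big1 // => i _; rewrite scale0r. Qed.

Lemma SN N x : S N (- x) = - S N x.
Proof. by rewrite -scaleN1r SZ scaleN1r. Qed.

Lemma SB N x y : S N (x - y) = S N x - S N y.
Proof. by rewrite SD SN. Qed.

Lemma S_0 x : S 0 x = 0.
Proof. by rewrite /S big_ord0. Qed.

Lemma S_succ N x : S N.+1 x - S N x = cf x N *: e N.
Proof. by rewrite /S big_ord_recr /= [X in X - _]addrC addrK. Qed.


Definition F (k : nat) := [set y : X | forall N, nn (S N y) <= k%:R].

Lemma F_cover x : exists k, F k x.
Proof.
have [N0 HN0] := (cvgnnP _ _).1 (S_cvg x) 1 ltr01.
pose B := \sum_(i < N0) nn (S i x) + (nn x + 1).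
have B0 : 0 <= \sum_(i < N0) nn (S i x) by apply: sumr_ge0 => i _; exact: nn_ge0.
exists (Num.truncn B).+1 => N.
apply: (le_trans _ (ltW (truncnS_gt B))).
have [hN|hN] := leqP N0 N.
  have h1 := HN0 N hN.
  have := nn_tri (S N x) x 0; rewrite !subr0 nnB => h2.
  rewrite /B; by lra.
have h : nn (S N x) <= \sum_(i < N0) nn (S i x).
  rewrite (bigD1 (Ordinal hN)) //= ler_wpDr //.
  by apply: sumr_ge0 => i _; exact: nn_ge0.
have := nn_ge0 x; rewrite /B; by lra.
Qed.

Lemma claimA : exists M : R, 0 <= M /\ forall z eps, 0 < eps ->
  exists y, nn (z - y) < eps /\ forall N, nn (S N y) <= M * nn z.
Proof.
have [k [x0 [r [r0 hball]]]] := baire (fun k => closure (F k))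
  (fun k => @closed_closure _ (F k))
  (fun x => let: ex_intro k hk := F_cover x in ex_intro _ k (subset_closure hk)).
exists (4 * k%:R / r); split.
  by rewrite divr_ge0 ?mulr_ge0 ?ler0n // ltW.
move=> z eps eps0.
have [->|z0] := eqVneq z 0.
  exists 0; rewrite subrr nn0; split => // N.
  by rewrite S0 nn0 mulr0.
have nz0 : 0 < nn z by rewrite lt_def nn_eq0 z0 nn_ge0.
pose t := r / (2 * nn z).
have t0 : 0 < t by rewrite divr_gt0 // mulr_gt0.
pose u := x0 + t%:C *: z.
have hu : closure (F k) u.
  apply: hball; rewrite /u opprD addrA subrr add0r nnN nnZr gtr0_norm //.
  have -> : t * nn z = r / 2 by rewrite /t; field; rewrite gt_eqF.
  by lra.
have hx0 : closure (F k) x0 by apply: hball; rewrite subrr nn0.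
have d0 : 0 < t * eps / 2 by rewrite divr_gt0 // mulr_gt0.
have [u' [Fu' hu']] := closure_nn _ _ hu _ d0.
have [v' [Fv' hv']] := closure_nn _ _ hx0 _ d0.
exists (t^-1%:C *: (u' - v')); split.
  have tC : t%:C != 0 by rewrite (inj_eq (@complexI R)) gt_eqF.
  have -> : z - t^-1%:C *: (u' - v') = t^-1%:C *: ((u - u') - (x0 - v')).
    rewrite /u -[in LHS](scale1r z) -(mulVf tC) -scalerA -rmorphV ?unitfE ?gt_eqF //.
    rewrite -scalerBr; congr (_ *: _).
    by rewrite [x0 + _]addrC -!addrA; congr (_ + _); rewrite opprB addrCA opprB [x0 + _]addrC subrK addrC.
  rewrite nnZr gtr0_norm ?invr_gt0 //.
  have := nnD (u - u') (- (x0 - v')); rewrite nnN => h.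
  rewrite -ltr_pdivlMl ?invr_gt0 // invrK.
  apply: (le_lt_trans h).
  have : t * eps / 2 + t * eps / 2 = t * eps by rewrite -splitr.
  by lra.
move=> N; rewrite SZ SB nnZr gtr0_norm ?invr_gt0 //.
have h := nnD (S N u') (- S N v'); rewrite nnN in h.
have h2 : nn (S N u' - S N v') <= 2 * k%:R by have := Fu' N; have := Fv' N; lra.
have ti : 0 <= t^-1 by rewrite invr_ge0 ltW.
apply: (le_trans (ler_wpM2l ti h2)).
rewrite /t invf_div.
have -> : 2 * nn z / r * (2 * k%:R) = 4 * k%:R / r * nn z.
  by field; rewrite gt_eqF.
by [].
Qed.

Lemma lemH (Q : nat -> X) x (b : nat -> R) :
  Q @ \oo --> x ->
  (forall eps, 0 < eps -> exists J0, forall J, (J0 <= J)%N -> b J < eps) ->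
  (forall J K N, (J <= K)%N -> nn (S N (Q K) - S N (Q J)) <= b J) ->
  forall N J, nn (S N x - S N (Q J)) <= b J.
Proof.
move=> hQ hb hC.
have Pex : forall N, exists P : X, (fun J => S N (Q J)) @ \oo --> P.
  move=> N; apply: cauchy_nn => eps eps0.
  have [J0 HJ0] := hb _ (divr_gt0 eps0 (ltr0Sn R 1)).
  exists J0 => m n hm hn.
  apply: (le_lt_trans (nn_tri _ (S N (Q J0)) _)).
  have h1 := hC _ _ N hm; have h2 := hC _ _ N hn; rewrite nnB in h2.
  have h3 := HJ0 J0 (leqnn _).
  by lra.
have [P HP] := choice Pex.
have Pb : forall N J, nn (P N - S N (Q J)) <= b J.
  move=> N J; rewrite nnB; apply: (le_lim _ _ _ _ J (HP N)) => K hK.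
  by rewrite nnB; apply: hC.
have P0 : P 0%N = 0.
  apply: (lim_uniq _ _ _ (HP 0%N)); apply: (cvg_eqP _ _ 0%N) => n _.
  exact: S_0.
have inc : forall N, exists c, P N.+1 - P N = c *: e N.
  move=> N; apply: (line _ _ (fun J => cf (Q J) N)) ; first exact: e_neq0.
  have h := cvgB (HP N.+1) (HP N).
  have -> : (fun J => cf (Q J) N *: e N) = (fun J => S N.+1 (Q J)) - (fun J => S N (Q J)).
    by apply: funext => J; rewrite [RHS]/GRing.add /= -S_succ.
  exact: h.
have [c Hc] := choice inc.
have Psum : forall N, P N = \sum_(n < N) c n *: e n.
  elim => [|N IH]; first by rewrite P0 big_ord0.
  by rewrite big_ord_recr /= -IH -Hc addrC subrK.
have hexp : has_expansion e x c.
  rewrite /has_expansion.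
  have <- : P = (fun N => \sum_(n < N) c n *: e n) by apply: funext.
  apply/cvgnnP => eps eps0.
  have e3 : 0 < eps / 3 by rewrite divr_gt0.
  have [J0 HJ0] := hb _ e3.
  have [J1 HJ1] := (cvgnnP _ _).1 hQ _ e3.
  set J := maxn J0 J1.
  have hJ0 := HJ0 J (leq_maxl _ _).
  have hJ1 := HJ1 J (leq_maxr _ _).
  have [N1 HN1] := (cvgnnP _ _).1 (S_cvg (Q J)) _ e3.
  exists N1 => N hN.
  have h1 := HN1 N hN.
  have h2 := Pb N J; rewrite nnB in h2.
  have h3 := nn_tri x (Q J) (P N).
  have h4 := nn_tri (Q J) (S N (Q J)) (P N).
  by lra.
have hS : forall N, S N x = P N.
  by move=> N; rewrite /S (cf_uniq _ _ hexp) Psum.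
by move=> N J; rewrite hS.
Qed.

Lemma unif : exists M : R, 0 <= M /\ forall x N, nn (S N x) <= M * nn x.
Proof.
have [M0 [M00 hA]] := claimA.
exists (2 * M0); split; first by rewrite mulr_ge0.
move=> x N.
have [->|x0] := eqVneq x 0; first by rewrite S0 nn0 mulr0.
have nx0 : 0 < nn x by rewrite lt_def nn_eq0 x0 nn_ge0.
pose h (j : nat) := nn x / 2 ^+ j.
have h0 : forall j, 0 < h j by move=> j; rewrite divr_gt0 // exprn_gt0.
have hS : forall j, h j.+1 = h j / 2 by move=> j; rewrite /h exprSr invfM mulrA.
have gex : forall p : X * R, exists y : X, 0 < p.2 ->
    nn (p.1 - y) < p.2 /\ forall N, nn (S N y) <= M0 * nn p.1.
  move=> [z eps] /=; case: (boolP (0 < eps)) => eps0; last by exists 0.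
  by have [y hy] := hA z eps eps0; exists y.
have [g Hg] := choice gex.
pose fix z j := if j is i.+1 then z i - g (z i, h i.+1) else x.
have zb : forall j, nn (z j) <= h j.
  case => [|j]; first by rewrite /h expr0 divr1.
  by have [/ltW] := Hg (z j, h j.+1) (h0 _).
pose Q J := x - z J.
have hQ : Q @ \oo --> x.
  apply/cvgnnP => eps eps0.
  have [J0 HJ0] := hsmall _ (nn_ge0 x) _ eps0.
  exists J0 => J hJ; rewrite /Q opprB addrC subrK.
  exact: le_lt_trans (zb J) (HJ0 J hJ).
pose b J := 2 * M0 * h J.
have hb : forall eps, 0 < eps -> exists J0, forall J, (J0 <= J)%N -> b J < eps.
  move=> eps eps0.
  have [J0 HJ0] := hsmall _ (mulr_ge0 (mulr_ge0 (ler0n _ 2) M00) (nn_ge0 x)) _ eps0.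
  by exists J0 => J /HJ0; rewrite /b /h mulrA.
have step : forall K N1, nn (S N1 (Q K.+1) - S N1 (Q K)) <= M0 * h K.
  move=> K N1; rewrite -SB /Q /= !opprB addrC subrKA addrC subrK.
  have [_] := Hg (z K, h K.+1) (h0 _) => /(_ N1) hy; apply: (le_trans hy); rewrite ler_wpM2l //; exact: zb.
have hC' : forall J d N1, nn (S N1 (Q (J + d)%N) - S N1 (Q J)) <= b J - b (J + d)%N.
  move=> J d N1; elim: d => [|d IH]; first by rewrite addn0 subrr nn0 subrr.
  rewrite addnS.
  have := nn_tri (S N1 (Q (J + d).+1)) (S N1 (Q (J + d)%N)) (S N1 (Q J)).
  have := step (J + d)%N N1.
  have -> : b J - b (J + d).+1 = (b J - b (J + d)%N) + M0 * h (J + d)%N.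
    by rewrite /b hS; field.
  by lra.
have hC : forall J K N1, (J <= K)%N -> nn (S N1 (Q K) - S N1 (Q J)) <= b J.
  move=> J K N1 /subnKC <-; apply: (le_trans (hC' J (K - J)%N N1)).
  rewrite gerBl /b mulr_ge0 ?mulr_ge0 //; exact: ltW.
have := lemH _ _ _ hQ hb hC N 0%N.
by rewrite /Q /= subrr S0 subr0 /b /h expr0 divr1.
Qed.

Lemma cf_bound m : exists C : R, forall x, nc (cf x m) <= C * nn x.
Proof.
have [M [M0 hM]] := unif.
have em0 : 0 < nn (e m) by rewrite lt_def nn_eq0 e_neq0 nn_ge0.
exists (2 * M / nn (e m)) => x.
rewrite mulrAC ler_pdivlMr // -nnZ -S_succ.
have := nnD (S m.+1 x) (- S m x); rewrite nnN.
have := hM x m.+1; have := hM x m.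
by lra.
Qed.

End P1.

Lemma maxE {R : realType} (a b : R[i]) : Num.max a b = if a < b then b else a.
Proof. by []. Qed.

Lemma max_ge0 {R : realType} (x : R[i]) : x \is Num.real -> x = Num.max x 0 -> 0 <= x.
Proof.
move=> xr; rewrite maxE; case: ifP => [x0 ->//|x0 _].
by move: xr; rewrite realE => /orP[//|]; rewrite le_eqVlt x0 orbF => /eqP ->.
Qed.

Lemma max_disj {R : realType} (a b : R[i]) : 0 <= a -> 0 <= b ->
  a + b = Num.max a b -> a = 0 \/ b = 0.
Proof.
move=> a0 b0; rewrite maxE; case: ifP => _ h.
  by left; apply: (@addIr _ b); rewrite h add0r.
by right; apply: (@addrI _ a); rewrite h addr0.
Qed.

Section Main.
Context {R : realType} {X : completeNormedModType R[i]}.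
Variable e : nat -> X.
Variable T : {linear X -> X}.
Hypothesis hub : unconditional_basis e.
Hypothesis hT : continuous T.
Hypothesis hlat : lattice_hom e T.
Hypothesis hinj : injective T.
Hypothesis hdense : closure (range T) = setT.

Let ub : forall x, exists! a, has_expansion e x a := fun x => (hub x).1.
Local Notation cf := (cf e ub).
Local Notation SS := (S e ub).

Lemma cfB x y : cf (x - y) = fun n => cf x n - cf y n.
Proof.
rewrite (cfD e ub) -scaleN1r (cfZ e ub); apply: funext => n.
by rewrite mulN1r.
Qed.

Lemma cf_inj x y : cf x = cf y -> x = y.
Proof.
move=> h; apply: (lim_uniq _ _ _ (S_cvg e ub x)).
have -> : (fun N => SS N x) = (fun N => SS N y) by apply: funext => N; rewrite /S h.
exact: S_cvg.
Qed.

Lemma vanish_approx (A : set X) y (phi : X -> R[i]) K : 0 <= K ->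
  (forall u v, phi (u - v) = phi u - phi v) -> (forall u, nc (phi u) <= K * nn u) ->
  (forall u, A u -> phi u = 0) ->
  (forall eps, 0 < eps -> exists u, A u /\ nn (y - u) < eps) -> phi y = 0.
Proof.
move=> K0 hB hK hA hy; apply/eqP; rewrite -nc_eq0 eq_le nc_ge0 andbT.
apply/ler_addgt0Pr => eps eps0; rewrite add0r.
have K1 : 0 < K + 1 by rewrite ltr_wpDl.
have [u [Au hu]] := hy _ (divr_gt0 eps0 K1).
have -> : phi y = phi (y - u) by rewrite hB (hA u Au) subr0.
apply: (le_trans (hK _)).
have h1 : K * nn (y - u) <= (K + 1) * nn (y - u) by rewrite ler_wpM2r ?nn_ge0 // lerDl.
apply: (le_trans h1).
rewrite -ler_pdivlMl // mulrC; exact: ltW.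
Qed.

Lemma phi_vanish (a b : R[i]) p q :
  (forall k, a * cf (T (e k)) p + b * cf (T (e k)) q = 0) ->
  forall y, a * cf y p + b * cf y q = 0.
Proof.
move=> hk.
pose phi y := a * cf y p + b * cf y q.
have hB : forall u v, phi (u - v) = phi u - phi v.
  by move=> u v; rewrite /phi cfB; ring.
have [Cp hCp] := cf_bound e ub p.
have [Cq hCq] := cf_bound e ub q.
pose K := nc a * `|Cp| + nc b * `|Cq|.
have K0 : 0 <= K by rewrite /K addr_ge0 // mulr_ge0 ?nc_ge0.
have hK : forall u, nc (phi u) <= K * nn u.
  move=> u; rewrite /phi /K.
  apply: (le_trans (ncD _ _)); rewrite !ncM mulrDl.
  apply: lerD; rewrite -mulrA ler_wpM2l ?nc_ge0 //.
    apply: (le_trans (hCp u)); rewrite ler_wpM2r ?nn_ge0 // ler_norm //.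
  apply: (le_trans (hCq u)); rewrite ler_wpM2r ?nn_ge0 // ler_norm //.
have hsum : forall N (f : nat -> X) (c : nat -> R[i]),
    phi (\sum_(n < N) c n *: f n) = \sum_(n < N) c n * phi (f n).
  move=> N f c; elim: N => [|N IH].
    by rewrite !big_ord0 /phi (cf0 e ub) mulr0 mulr0 addr0.
  rewrite !big_ord_recr /= -IH /phi (cfD e ub) !(cfZ e ub); ring.
have hT0 : forall x, phi (T x) = 0.
  move=> x; apply: (vanish_approx (fun u => exists N, u = T (SS N x)) _ _ _ K0 hB hK).
    move=> u [N ->]; rewrite /S linear_sum.
    rewrite (eq_bigr (fun n : 'I_N => cf x n *: T (e n))); last by move=> n _; rewrite linearZ.
    by rewrite (hsum N (fun n => T (e n)) (cf x)) big1 // => n _; rewrite /phi hk mulr0.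
  move=> eps eps0.
  have hc : (T \o (fun N => SS N x)) @ \oo --> T x.
    by apply: continuous_cvg; [exact: hT | exact: S_cvg].
  have [N HN] := (cvgnnP _ _).1 hc _ eps0.
  by exists (T (SS N x)); split; [exists N | exact: HN].
move=> y; apply: (vanish_approx (range T) _ _ _ K0 hB hK).
  by move=> u [x _ <-]; exact: hT0.
apply: closure_nn; by rewrite hdense.
Qed.

Lemma T0 : T 0 = 0.
Proof. exact: linear0. Qed.

Lemma real_e k : real_coords e (e k).
Proof. by move=> a ha n; rewrite -(cf_uniq e ub _ _ ha) (cfe e ub); exact: realn. Qed.

Lemma real_0 : real_coords e 0.
Proof. by move=> a ha n; rewrite -(cf_uniq e ub _ _ ha) (cf0 e ub); exact: real0. Qed.

Lemma t_ge0 k n : 0 <= cf (T (e k)) n.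
Proof.
have hj : is_join e (e k) 0 (e k).
  split; [exact: real_e | split; [exact: real_0 |]].
  move=> a b c ha hb hc m.
  rewrite -(cf_uniq e ub _ _ ha) -(cf_uniq e ub _ _ hb) -(cf_uniq e ub _ _ hc) (cfe e ub) (cf0 e ub) maxE.
  by case: (m == k); rewrite ?ltr10 ?ltxx.
have [rx [_ H]] := hlat _ _ _ (real_e k) real_0 hj.
apply: max_ge0; first exact: rx (cfP e ub _) n.
have := H _ _ _ (cfP e ub _) (cfP e ub _) (cfP e ub _) n.
by rewrite T0 (cf0 e ub).
Qed.

Lemma t_disj k j n : k != j -> cf (T (e k)) n = 0 \/ cf (T (e j)) n = 0.
Proof.
move=> kj.
have hj : is_join e (e k) (e j) (e k + e j).
  split; [exact: real_e | split; [exact: real_e |]].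
  move=> a b c ha hb hc m.
  rewrite -(cf_uniq e ub _ _ ha) -(cf_uniq e ub _ _ hb) -(cf_uniq e ub _ _ hc) (cfD e ub) !(cfe e ub) maxE.
  case: (eqVneq m k) => [->|mk].
    by rewrite (negbTE kj) /= addr0 ltr10.
  by case: (m == j); rewrite /= ?add0r ?addr0 ?ltr01 ?ltxx.
have [_ [_ H]] := hlat _ _ _ (real_e k) (real_e j) hj.
have := H _ _ _ (cfP e ub _) (cfP e ub _) (cfP e ub _) n.
rewrite linearD (cfD e ub) /=.
by apply: max_disj; apply: t_ge0.
Qed.

Lemma t_nz k : exists m, cf (T (e k)) m != 0.
Proof.
apply: contrapT => H.
have : cf (T (e k)) = cf 0.
  apply: funext => m; rewrite (cf0 e ub); apply/eqP; apply/negPn/negP => hm.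
  by apply: H; exists m.
move/cf_inj; rewrite -T0 => /hinj /eqP.
by apply/negP; exact: (e_neq0 e ub k).
Qed.

Lemma t_single k p q : cf (T (e k)) p != 0 -> cf (T (e k)) q != 0 -> p = q.
Proof.
move=> hp hq; apply: contrapT => pq.
have pq' : (p == q) = false by apply/eqP.
have hk : forall j, cf (T (e k)) q * cf (T (e j)) p + - cf (T (e k)) p * cf (T (e j)) q = 0.
  move=> j; case: (eqVneq j k) => [->|jk]; first by ring.
  have kj : k != j by rewrite eq_sym.
  case: (t_disj _ _ p kj) => [/eqP|->]; first by rewrite (negbTE hp).
  case: (t_disj _ _ q kj) => [/eqP|->]; first by rewrite (negbTE hq).
  by ring.
have := phi_vanish _ _ p q hk (e p).
rewrite !(cfe e ub) /= eqxx eq_sym pq' mulr0 addr0 mulr1 => /eqP.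
by rewrite (negbTE hq).
Qed.

Lemma t_cover m : exists k, cf (T (e k)) m != 0.
Proof.
apply: contrapT => H.
have hk : forall k, 1 * cf (T (e k)) m + 0 * cf (T (e k)) m = 0.
  move=> k; rewrite mul0r addr0 mul1r; apply/eqP; apply/negPn/negP => hk.
  by apply: H; exists k.
have := phi_vanish _ _ m m hk (e m).
by rewrite !(cfe e ub) /= eqxx mul0r addr0 mulr1 => /eqP; rewrite oner_eq0.
Qed.

Lemma main_res : exists xi : nat -> nat, bijective xi /\
    exists w : nat -> R, (forall n, 0 < w n) /\
      forall n, T (e n) = ((w n)%:C)%C *: e (xi n).
Proof.
have [xi hxi] := choice t_nz.
have [g hg] := choice t_cover.
exists xi; split.
  exists g.
    move=> k; case: (eqVneq (g (xi k)) k) => // hne.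
    case: (t_disj _ _ (xi k) hne) => /eqP; [by rewrite (negbTE (hg (xi k))) | by rewrite (negbTE (hxi k))].
  by move=> m; apply: (t_single _ _ _ (hxi (g m)) (hg m)).
exists (fun k => complex.Re (cf (T (e k)) (xi k))); split.
  move=> n; have h0 := t_ge0 n (xi n); have hn := hxi n.
  have : 0 < cf (T (e n)) (xi n) by rewrite lt_def hn h0.
  by rewrite ltcE /= => /andP[].
move=> k; rewrite (RRe_real (ger0_real (t_ge0 k (xi k)))).
apply: cf_inj; rewrite (cfZ e ub) (cfe e ub); apply: funext => n /=.
case: (eqVneq n (xi k)) => [->|hn] /=; first by rewrite mulr1.
rewrite mulr0; apply/eqP; apply/negPn/negP => h.
by move: hn; rewrite (t_single _ _ _ h (hxi k)) eqxx.
Qed.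

End Main.

Theorem proposition3p2 (R : realType) (X : completeNormedModType R[i])
    (e : nat -> X) (T : {linear X -> X}) :
  unconditional_basis e ->
  continuous T ->
  lattice_hom e T ->
  injective T ->
  closure (range T) = setT ->
  exists xi : nat -> nat, bijective xi /\
    exists w : nat -> R, (forall n, 0 < w n) /\
      forall n, T (e n) = ((w n)%:C)%C *: e (xi n).
Proof.
move=> hub hT hlat hinj hdense.
exact: (main_res e T hub hT hlat hinj hdense).
Qed.
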